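(* Let $\lambda>0$ and $\psi(r)=\frac\lambda2\,\mathrm{dist}(r,\mathbb Z)^2$, and let $y=\hat y+u$ with $u\in\dot{\mathscr W}^{1,2}$ be a locally stable equilibrium. Then $Dy_b\in\mathbb R\setminus(\tfrac12+\mathbb Z)$ for all $b\in\mathcal B$, and $$\sum_{b\in\mathcal B}\psi''(Dy_b)\,Dv_b^2\ge\lambda\|Dv\|_2^2\qquad\text{for all }v\in\dot{\mathscr W}^{1,2}.$$
   Context: $\mathsf R_6$ rotation by $\pi/3$, $a_1=(1,0)^T$, $a_i=\mathsf R_6^{i-1}a_1$, $\Lambda:=(\tfrac12,\tfrac{\sqrt3}{6})^T+\{ma_1+na_2:m,n\in\mathbb Z\}$. Bonds $\mathcal B=\{(\xi,\eta)\in\Lambda^2:|\xi-\eta|=1\}$ (ordered), $Dy_b=y(\eta)-y(\xi)$, $\|Dv\|_2=(\sum_{b\in\mathcal B}|Dv_b|^2)^{1/2}$. $\xi_0=(0,\sqrt3/3)^T$; $\mathscr W_0=\{v:\Lambda\to\mathbb R: v(\xi_0)=0,\ \{b:Dv_b\ne0\}$ bounded$\}$; $\dot{\mathscr W}^{1,2}=\{v: v(\xi_0)=0,\ Dv\in\ell^2(\mathcal B)\}$. $\hat y(x)=\frac1{2\pi}\arg(x)$ on $\Lambda$ (branch cut along the positive $x_1$-axis). For $w\in\mathscr W_0$, $E(y+w;y):=\sum_{b\in\mathcal B}[\psi(Dy_b+Dw_b)-\psi(Dy_b)]$. A displacement $y$ is a locally stable equilibrium if there exists $\epsilon>0$ with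 $E(y+w;y)\ge0$ for all $w\in\mathscr W_0$ with $\|Dw\|_2\le\epsilon$. *)

(* Defs.v *)
From HB Require Import structures.
From mathcomp Require Import all_boot all_order all_algebra.
From mathcomp Require Import all_classical all_reals all_analysis.
Set Implicit Arguments. Unset Strict Implicit. Unset Printing Implicit Defensive.
Import Order.TTheory GRing.Theory Num.Theory.
Import numFieldNormedType.Exports.
Local Open Scope classical_set_scope.
Local Open Scope ring_scope.

Section Defs.
Variable R : realType.

(* Lattice sites are indexed by (m, n) : int * int; the site (m,n) is
   (1/2, sqrt3/6) + m a1 + n a2 with a1 = (1,0), a2 = R6 a1 = (1/2, sqrt3/2). *)
Definition site := (int * int)%type.

Definition sqrt3 : R := Num.sqrt 3.

Definition pos1 (x : site) : R := 2^-1 + x.1%:~R + x.2%:~R / 2.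
Definition pos2 (x : site) : R := sqrt3 / 6 + x.2%:~R * (sqrt3 / 2).

Definition sdist (x y : site) : R :=
  Num.sqrt ((pos1 y - pos1 x) ^+ 2 + (pos2 y - pos2 x) ^+ 2).

Definition snorm (x : site) : R := Num.sqrt (pos1 x ^+ 2 + pos2 x ^+ 2).

Definition bond := (site * site)%type.
Definition bonds : set bond := [set b | sdist b.1 b.2 = 1].

Definition D (y : site -> R) (b : bond) : R := y b.2 - y b.1.

Definition xi0 : site := (0%Z, (-1)%Z).

Definition Dnorm2 (v : site -> R) : \bar R :=
  \esum_(b in bonds) ((D v b) ^+ 2)%:E.

Definition W0 (v : site -> R) : Prop :=
  v xi0 = 0 /\
  exists M : R, forall b, bonds b -> D v b != 0 ->
    snorm b.1 <= M /\ snorm b.2 <= M.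

Definition W12 (v : site -> R) : Prop :=
  v xi0 = 0 /\ (Dnorm2 v < +oo)%E.

(* argument of x in [0, 2pi) (branch cut along the positive x1-axis) *)
Definition arg2 (x1 x2 : R) : R :=
  let r := Num.sqrt (x1 ^+ 2 + x2 ^+ 2) in
  if 0 <= x2 then acos (x1 / r) else 2 * pi - acos (x1 / r).

Definition yhat (x : site) : R := (2 * pi)^-1 * arg2 (pos1 x) (pos2 x).

Definition distZ (r : R) : R := inf [set `|r - k%:~R| | k in [set: int]].
Definition psi (lam : R) (r : R) : R := lam / 2 * distZ r ^+ 2.

(* energy difference E(y + w; y) (finite sum for w in W_0) *)
Definition Ediff (lam : R) (y w : site -> R) : R :=
  \sum_(b \in bonds) (psi lam (D y b + D w b) - psi lam (D y b)).

Definition locally_stable (lam : R) (y : site -> R) : Prop :=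
  exists eps : R, 0 < eps /\
    forall w, W0 w -> (Dnorm2 w <= (eps ^+ 2)%:E)%E -> 0 <= Ediff lam y w.

Definition psi2 (lam : R) (r : R) : R := derive1 (derive1 (psi lam)) r.

End Defs.

(* Main.v *)
Require Import Defs.
From HB Require Import structures.
From mathcomp Require Import all_boot all_order all_algebra.
From mathcomp Require Import all_classical all_reals all_analysis.
From mathcomp Require Import ring lra zify.
Import Order.TTheory GRing.Theory Num.Theory.
Import numFieldNormedType.Exports.
Local Open Scope classical_set_scope.
Local Open Scope ring_scope.

Set Implicit Arguments. Unset Strict Implicit.
Section S.
Variable R : realType.
Implicit Types (r a t lam x : R).

Lemma distZ_le r (j : int) : distZ r <= `|r - j%:~R|.
Proof.
rewrite /distZ; apply: ge_inf; last by exists j.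
by exists 0 => _ [k _ <-].
Qed.

Lemma distZ_eq r (k : int) : `|r - k%:~R| <= 2^-1 -> distZ r = `|r - k%:~R|.
Proof.
move=> hk; apply/eqP; rewrite eq_le distZ_le /=.
apply: lb_le_inf; first by exists `|r - k%:~R|, k.
move=> _ [j _ <-].
have [->//|hjk] := eqVneq j k.
have h1 : 1 <= `|j%:~R - k%:~R : R|.
  rewrite -intrB -intr_norm ler1z.
  by rewrite -gtz0_ge1 normr_gt0 subr_eq0.
have : `|j%:~R - k%:~R : R| <= `|r - j%:~R| + `|r - k%:~R|.
  rewrite (_ : j%:~R - k%:~R = (r - k%:~R) - (r - j%:~R)); last by ring.
  by rewrite (le_trans (ler_normB _ _)) // addrC.
move: hk h1; set x := `|r - k%:~R|; set y := `|r - j%:~R|; set z := `|_ - _|.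
move=> *; lra.
Qed.

Lemma distZ_ex r : exists k : int, `|r - k%:~R| <= 2^-1.
Proof.
exists (Num.floor (r + 2^-1)).
have h1 := real_floor_le (num_real (r + 2^-1)).
have h2 := real_floorD1_gt (num_real (r + 2^-1)).
rewrite intrD in h2.
move: h1 h2; set f := (Num.floor _)%:~R => h1 h2.
rewrite ler_norml; apply/andP; split; lra.
Qed.

Lemma distZ_ge0 r : 0 <= distZ r.
Proof. by have [k hk] := distZ_ex r; rewrite (distZ_eq hk). Qed.

Lemma psi_semi lam a t : 0 <= lam ->
  psi lam (a + t) + psi lam (a - t) - 2 * psi lam a <= lam * t ^+ 2.
Proof.
move=> hl; have [k hk] := distZ_ex a.
have e := distZ_eq hk.
have h1 := distZ_le (a + t) k; have h2 := distZ_le (a - t) k.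
have g1 := distZ_ge0 (a + t); have g2 := distZ_ge0 (a - t).
rewrite /psi e.
have q1 : distZ (a + t) ^+ 2 <= (a + t - k%:~R) ^+ 2.
  rewrite -(real_normK (num_real (a + t - k%:~R))).
  have := normr_ge0 (a + t - k%:~R); nra.
have q2 : distZ (a - t) ^+ 2 <= (a - t - k%:~R) ^+ 2.
  rewrite -(real_normK (num_real (a - t - k%:~R))).
  have := normr_ge0 (a - t - k%:~R); nra.
rewrite real_normK ?num_real //.
move: q1 q2; set d1 := distZ _ ^+ 2; set d2 := distZ _ ^+ 2 => q1 q2.
set K := k%:~R.
have : lam * d1 <= lam * (a + t - K) ^+ 2 by apply: ler_wpM2l.
have : lam * d2 <= lam * (a - t - K) ^+ 2 by apply: ler_wpM2l.
move=> *; nra.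
Qed.

Lemma psi_half lam a t (k : int) : 0 <= lam -> a = 2^-1 + k%:~R ->
  `|t| <= 2^-1 ->
  psi lam (a + t) + psi lam (a - t) - 2 * psi lam a <= lam * (t ^+ 2 - `|t|).
Proof.
move=> hl ha ht.
have e : distZ a = 2^-1.
  rewrite (distZ_eq (k:=k)); rewrite ha addrK ger0_norm //; lra.
subst a; rewrite /psi e.
wlog t0 : t ht / 0 <= t.
  move=> W; have [/W|tn] := leP 0 t; first exact.
  have := W (- t); rewrite normrN opprK sqrrN => /(_ ht).
  rewrite oppr_ge0 ltW // => /(_ isT); lra.
rewrite ger0_norm // in ht *.
have h1 := distZ_le (2^-1 + k%:~R + t) (k + 1); have h2 := distZ_le (2^-1 + k%:~R - t) k.
have g1 := distZ_ge0 (2^-1 + k%:~R + t); have g2 := distZ_ge0 (2^-1 + k%:~R - t).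
rewrite intrD in h1.
rewrite (_ : 2^-1 + k%:~R + t - (k%:~R + 1%:~R) = - (2^-1 - t)) in h1; last by rewrite /=; field.
rewrite (_ : 2^-1 + k%:~R - t - k%:~R = (2^-1 - t)) in h2; last by field.
rewrite normrN ger0_norm in h1; last lra.
rewrite ger0_norm in h2; last lra.
move: h1 h2 g1 g2; set d1 := distZ _; set d2 := distZ _ => h1 h2 g1 g2.
have q1 : d1 ^+ 2 <= (2^-1 - t) ^+ 2 by nra.
have q2 : d2 ^+ 2 <= (2^-1 - t) ^+ 2 by nra.
have : lam * d1 ^+ 2 <= lam * (2^-1 - t) ^+ 2 by apply: ler_wpM2l.
have : lam * d2 ^+ 2 <= lam * (2^-1 - t) ^+ 2 by apply: ler_wpM2l.
have -> : lam * (2^-1 - t) ^+ 2 = lam / 4 - lam * t + lam * t ^+ 2 by field.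
rewrite -/d1 -/d2.
have -> : lam / 2 * d1 ^+ 2 + lam / 2 * d2 ^+ 2 - 2 * (lam / 2 * 2^-1 ^+ 2)
   = (lam * d1 ^+ 2 + lam * d2 ^+ 2) / 2 - lam / 4 by field.
rewrite mulrBr.
move=> *; lra.
Qed.

Lemma near_abs (a c d : R) : `|a - c| < d -> \forall r \near a, `|r - c| < d.
Proof.
move=> h; apply/nbhs_ballP; exists (d - `|a - c|) => /=; first by rewrite subr_gt0.
move=> r; rewrite /ball /= => hr.
have : `|r - c| <= `|a - r| + `|a - c|.
  rewrite (_ : r - c = (a - c) - (a - r)); last by ring.
  by rewrite (le_trans (ler_normB _ _)) // addrC.
lra.
Qed.

Lemma dquad (lam c x : R) : derive1 (fun r => lam / 2 * (r - c) ^+ 2) x = lam * (x - c).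
Proof.
rewrite derive1E derive_val /GRing.scale /=; by field.
Qed.
Lemma dlin (lam c x : R) : derive1 (fun r => lam * (r - c)) x = lam.
Proof. rewrite derive1E derive_val /GRing.scale /=; by field. Qed.

Lemma psi_loc lam x (k : int) : `|x - k%:~R| < 2^-1 ->
  \forall r \near x, psi lam r = lam / 2 * (r - k%:~R) ^+ 2.
Proof.
move=> h; near=> r.
have hr : `|r - k%:~R| < 2^-1 by near: r; exact: near_abs.
by rewrite /psi (distZ_eq (ltW hr)) real_normK ?num_real.
Unshelve. all: by end_near.
Qed.

Lemma psi2_val lam a : (~ exists k : int, a = 2^-1 + k%:~R) -> psi2 lam a = lam.
Proof.
move=> nh; have [k hk] := distZ_ex a.
have hk' : `|a - k%:~R| < 2^-1.
  rewrite lt_neqAle hk andbT; apply/negP => /eqP e.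
  apply: nh; move: e; have [p|n] := leP 0 (a - k%:~R).
    rewrite ger0_norm // => e; exists k; lra.
  rewrite ltr0_norm // => e; exists (k - 1); rewrite intrB; lra.
rewrite /psi2; transitivity (derive1 (fun r => lam * (r - k%:~R)) a); last exact: dlin.
rewrite !derive1E.
apply: near_eq_derive.
near=> r.
have hr : `|r - k%:~R| < 2^-1 by near: r; exact: near_abs.
transitivity (derive1 (fun r => lam / 2 * (r - k%:~R) ^+ 2) r); last exact: dquad.
rewrite !derive1E; apply: near_eq_derive.
by apply: filterS (psi_loc lam hr) => z ->.
Unshelve. all: by end_near.
Qed.

Lemma sdist1 (x y : site) : sdist R x y = 1 ->
  (pos1 R y - pos1 R x) ^+ 2 + (pos2 R y - pos2 R x) ^+ 2 = 1.
Proof.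
rewrite /sdist => h.
have h0 : 0 <= (pos1 R y - pos1 R x) ^+ 2 + (pos2 R y - pos2 R x) ^+ 2.
  by rewrite addr_ge0 // sqr_ge0.
by rewrite -(sqr_sqrtr h0) h expr1n.
Qed.

Lemma sqrt3K : sqrt3 R ^+ 2 = 3.
Proof. by rewrite /sqrt3 sqr_sqrtr. Qed.

Lemma pos_diff (x y : site) :
  pos1 R y - pos1 R x = (y.1 - x.1)%:~R + (y.2 - x.2)%:~R / 2 /\
  (pos2 R y - pos2 R x) ^+ 2 = 3 / 4 * (y.2 - x.2)%:~R ^+ 2.
Proof.
split; first by rewrite /pos1 !intrB; field.
rewrite /pos2 !intrB.
have -> : sqrt3 R / 6 + y.2%:~R * (sqrt3 R / 2) - (sqrt3 R / 6 + x.2%:~R * (sqrt3 R / 2))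
  = (y.2%:~R - x.2%:~R) * (sqrt3 R / 2) by field.
by rewrite exprMn expr_div_n sqrt3K; field.
Qed.

Definition offs : seq (int * int) :=
  [:: (-1, -1); (-1, 0); (-1, 1); (0, -1); (0, 0); (0, 1); (1, -1); (1, 0); (1, 1)].
Definition nbr (z : site) : seq site := [seq (z.1 + p.1, z.2 + p.2) | p <- offs].
Arguments nbr : simpl never.

Lemma int_small (m : int) : `|m%:~R : R| < 2 -> m = -1 \/ m = 0 \/ m = 1.
Proof.
rewrite -intr_norm (_ : 2 = 2%:~R) // ltr_int => h.
have : `|m| <= 1 by rewrite -ltzD1.
rewrite ler_norml => /andP[h1 h2]; lia.
Qed.

Lemma nbr_mem (x y : site) : sdist R x y = 1 -> y \in nbr x.
Proof.
move/sdist1; have [e1 e2] := pos_diff x y; rewrite e1 e2.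
set m := (y.1 - x.1)%:~R; set n := (y.2 - x.2)%:~R => h.
have hn : `|n| < 2.
  rewrite -(ltr_pXn2r (n := 2)) ?nnegrE // real_normK ?num_real //.
  have := sqr_ge0 (m + n / 2); nra.
have hm : `|m| < 2.
  have hn1 : `|n| <= 1 by move: hn; rewrite /n; case/int_small => [->|[->|->]]; rewrite ?normrN ?normr0 ?normr1.
  have hmn : `|m + n / 2| <= 1.
    rewrite -(ler_pXn2r (n := 2)) ?nnegrE // real_normK ?num_real // expr1n.
    have := sqr_ge0 n; nra.
  have : `|m| <= `|m + n / 2| + `|n / 2|.
    rewrite (_ : m = (m + n / 2) - n / 2); last by ring.
    by rewrite (le_trans (ler_normB _ _)) // addrK.
  rewrite normrM (ger0_norm (_ : 0 <= 2^-1)) //; lra.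
have [a1|[a1|a1]] := int_small hm; have [b1|[b1|b1]] := int_small hn;
  rewrite /nbr; apply/mapP;
  [exists (-1, -1)|exists (-1, 0)|exists (-1, 1)|exists (0, -1)|exists (0, 0)|
   exists (0, 1)|exists (1, -1)|exists (1, 0)|exists (1, 1)] => //=;
  clear -a1 b1; move: a1 b1; case: y => y1 y2 /= a1 b1; congr pair; lia.
Qed.

Lemma fsum_seq (r : seq bond) (F : bond -> R) : uniq r ->
  (forall b, b \in r -> bonds R b) ->
  (forall b, bonds R b -> b \notin r -> F b = 0) ->
  \sum_(b \in bonds R) F b = \sum_(b <- r) F b.
Proof.
move=> ur rb Fz; rewrite (fsbigE r) //.
  rewrite big_seq_cond [RHS]big_seq_cond; apply: eq_bigl => b.
  by case hb: (b \in r) => //=; apply: mem_set; apply: rb.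
Qed.

Lemma esum_seq (r : seq bond) (G : bond -> R) : uniq r ->
  (forall b, b \in r -> bonds R b) ->
  (forall b, bonds R b -> b \notin r -> G b = 0) ->
  (forall b, 0 <= G b) ->
  \esum_(b in bonds R) (G b)%:E = (\sum_(b <- r) G b)%:E.
Proof.
move=> ur rb Gz G0; rewrite esum_mkcond.
rewrite (eq_esum (b := fun i => if i \in [set` r] then (G i)%:E else 0%E)); last first.
  move=> i _; rewrite mem_setE /=.
  case hr: (i \in r); first by rewrite mem_set //; apply: rb.
  by case: ifP => // /set_mem hb; rewrite Gz ?hr.
rewrite -esum_mkcond esum_fset //; last first.
  by move=> i _; rewrite lee_fin.
  exact: finite_seq.
by rewrite -sumEFin (fsbig_seq _ _ ur).
Qed.

Lemma sdistC (x y : site) : sdist R x y = sdist R y x.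
Proof. by rewrite /sdist -(sqrrN (pos1 R x - _)) -(sqrrN (pos2 R x - _)) !opprB. Qed.

Lemma sdist_refl (x : site) : sdist R x x = 0.
Proof. by rewrite /sdist !subrr expr0n /= addr0 sqrtr0. Qed.

Lemma bond_diff (b : bond) : bonds R b ->
  `|pos1 R b.2 - pos1 R b.1| <= 1 /\ `|pos2 R b.2 - pos2 R b.1| <= 1.
Proof.
rewrite /bonds /= => /sdist1.
set u := pos1 R _ - _; set v := pos2 R _ - _ => h.
have hu : u ^+ 2 <= 1 by have := sqr_ge0 v; lra.
have hv : v ^+ 2 <= 1 by have := sqr_ge0 u; lra.
split; rewrite -(ler_pXn2r (n := 2)) ?nnegrE // real_normK ?num_real // expr1n.
  by []. by [].
Qed.

Lemma snorm_le (x : site) : snorm R x <= `|pos1 R x| + `|pos2 R x|.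
Proof.
rewrite /snorm.
have c0 : 0 <= `|pos1 R x| + `|pos2 R x| by rewrite addr_ge0.
rewrite -(ger0_norm c0) -sqrtr_sqr ler_sqrt ?sqr_ge0 //.
rewrite -(real_normK (num_real (pos1 R x))) -(real_normK (num_real (pos2 R x))).
have := normr_ge0 (pos1 R x); have := normr_ge0 (pos2 R x); nra.
Qed.

Definition delta (z : site) (t : R) : site -> R := fun (x : site) => if x == z then t else 0.
Definition cb (z : site) (b : bond) : R := (b.2 == z)%:R - (b.1 == z)%:R.

Lemma D_delta z t b : D (delta z t) b = t * cb z b.
Proof.
rewrite /D /delta /cb.
by case: (b.2 == z); case: (b.1 == z); rewrite /= ?subr0 ?sub0r ?mulr1 ?subrr ?mulr0 ?mulrN1.
Qed.

Lemma cb_sq z b : (cb z b) ^+ 2 <= 1.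
Proof. by rewrite /cb; case: (b.2 == z); case: (b.1 == z); rewrite /= ?subr0 ?sub0r ?subrr ?sqrrN ?expr1n ?expr0n. Qed.

Definition Lz (z : site) : seq bond :=
  [seq (z, s) | s <- nbr z] ++ [seq (s, z) | s <- nbr z].
Definition rz (z : site) : seq bond := [seq b <- undup (Lz z) | `[< bonds R b >]].

Lemma rz_uniq z : uniq (rz z).
Proof. by rewrite filter_uniq // undup_uniq. Qed.

Lemma rz_bonds z b : b \in rz z -> bonds R b.
Proof. by rewrite mem_filter => /andP[/asboolP]. Qed.

Lemma rz_size z : (size (rz z) <= 18)%N.
Proof.
rewrite size_filter (leq_trans (count_size _ _)) // (leq_trans (size_undup _)) //.
Qed.

Lemma rz_mem z b : bonds R b -> cb z b != 0 -> b \in rz z.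
Proof.
move=> hb; rewrite /rz mem_filter mem_undup; move: (hb) => /asboolP ->; rewrite andTb.
case: b hb => b1 b2 hb; rewrite /cb /=.
case e2: (b2 == z); case e1: (b1 == z); rewrite ?subrr ?eqxx // => _.
- move/eqP: e2 => e2; subst b2; rewrite /Lz mem_cat; apply/orP; right.
  apply/mapP; exists b1 => //.
  by apply: nbr_mem; rewrite sdistC.
- move/eqP: e1 => e1; subst b1; rewrite /Lz mem_cat; apply/orP; left.
  apply/mapP; exists b2 => //.
  exact: nbr_mem.
Qed.

Lemma sum_const_le (r : seq bond) (P : pred bond) (c : R) : 0 <= c ->
  (size r <= 18)%N -> \sum_(b <- r | P b) c <= 18 * c.
Proof.
move=> c0 hr; rewrite big_const_seq iter_addr_0 -mulr_natl.
have h : (count P r)%:R <= 18 :> R.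
  by rewrite ler_nat; exact: leq_trans (count_size _ _) hr.
nra.
Qed.

Lemma tri (a c : R) : `|a| <= `|a - c| + `|c|.
Proof. by rewrite -{1}(subrK c a) ler_normD. Qed.

Lemma not_half lam (y : site -> R) : 0 < lam -> locally_stable lam y ->
  forall b, bonds R b -> ~ exists k : int, D y b = 2^-1 + k%:~R.
Proof.
move=> hl [eps [he hst]] b0 hb0 [k hk].
have neq : b0.1 != b0.2.
  apply/negP => /eqP e; move: hb0; rewrite /bonds /= e sdist_refl => h.
  by have := @oner_neq0 R; rewrite -h eqxx.
pose z := if b0.2 == xi0 then b0.1 else b0.2.
have zx : z != xi0.
  rewrite /z; case: ifP => [/eqP e|/negbT //]; by rewrite -e.
have cz : cb z b0 = -1 \/ cb z b0 = 1.
  rewrite /cb /z; case: ifP => _; last by rewrite eqxx; right; rewrite (negbTE neq) subr0.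
  by rewrite eqxx eq_sym (negbTE neq) sub0r; left.
have cz0 : cb z b0 != 0 by case: cz => ->; rewrite ?oppr_eq0 oner_eq0.
pose t := Num.min (eps / 5) (20^-1).
have t0 : 0 < t by rewrite lt_min divr_gt0 //= invr_gt0.
have ht1 : t <= eps / 5 by rewrite ge_min lexx.
have ht2 : t <= 20^-1 by rewrite ge_min lexx orbT.
have ht2' : t <= 2^-1 by apply: le_trans ht2 _; lra.
have W0d : forall s, W0 (delta z s).
  move=> s; split; first by rewrite /delta eq_sym (negbTE zx).
  exists (`|pos1 R z| + `|pos2 R z| + 2) => b hb hD.
  have [d1 d2] := bond_diff hb.
  have s1 := snorm_le b.1; have s2 := snorm_le b.2.
  have u1 := tri (pos1 R b.2) (pos1 R b.1); have u2 := tri (pos2 R b.2) (pos2 R b.1).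
  have u3 := tri (pos1 R b.1) (pos1 R b.2); have u4 := tri (pos2 R b.1) (pos2 R b.2).
  rewrite distrC in u3; rewrite distrC in u4.
  rewrite D_delta /cb in hD.
  case e2: (b.2 == z) hD; case e1: (b.1 == z); rewrite ?subrr ?mulr0 ?eqxx // => _.
  - move/eqP: e2 => e2; rewrite e2 in s2 u3 u4 d1 d2 *; split; lra.
  - move: e1 => /eqP e1; rewrite e1 in s1 u1 u2 d1 d2 *; split; lra.
have Ed : forall s, Ediff lam y (delta z s) =
    \sum_(b <- rz z) (psi lam (D y b + s * cb z b) - psi lam (D y b)).
  move=> s; rewrite /Ediff (fsum_seq (rz_uniq z) (@rz_bonds z)).
    by apply: eq_bigr => b _; rewrite D_delta.
  move=> b hb hn; rewrite D_delta.
  have -> : cb z b = 0 by apply/eqP; apply: contraNT hn; exact: rz_mem hb.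
  by rewrite mulr0 addr0 subrr.
have Dn : forall s, `|s| <= t -> (Dnorm2 (delta z s) <= (eps ^+ 2)%:E)%E.
  move=> s hs; rewrite /Dnorm2 (esum_seq (G := fun b => D (delta z s) b ^+ 2) (rz_uniq z) (@rz_bonds z)); last 2 first.
  - move=> b hb hn; rewrite D_delta.
    have -> : cb z b = 0 by apply/eqP; apply: contraNT hn; exact: rz_mem hb.
    by rewrite mulr0 expr0n.
  - by move=> b; rewrite sqr_ge0.
  rewrite lee_fin.
  apply: (@le_trans _ _ (\sum_(b <- rz z | true) s ^+ 2)).
    apply: ler_sum => b _; rewrite D_delta exprMn.
    have := cb_sq z b; have := sqr_ge0 s; nra.
  apply: le_trans (@sum_const_le (rz z) (fun _ => true) _ (sqr_ge0 s) (rz_size z)) _.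
  have hs2 : s ^+ 2 <= t ^+ 2.
    rewrite -(real_normK (num_real s)); have := normr_ge0 s; nra.
  have := ltW t0; nra.
have nt : `|t| <= t by rewrite ger0_norm // ltW.
have nt' : `|- t| <= t by rewrite normrN.
have e1 := hst _ (W0d t) (Dn t nt).
have e2 := hst _ (W0d (- t)) (Dn (- t) nt').
rewrite !Ed in e1 e2.
have hsum := addr_ge0 e1 e2; rewrite -big_split /= in hsum.
rewrite (bigD1_seq b0) ?rz_uniq ?rz_mem //= in hsum.
have hb0' : psi lam (D y b0 + t * cb z b0) - psi lam (D y b0) +
    (psi lam (D y b0 + - t * cb z b0) - psi lam (D y b0)) <= lam * (t ^+ 2 - t).
  have hh := psi_half (ltW hl) hk (le_trans nt ht2').
  by case: cz => ->; rewrite ?mulrN1 ?mulr1 ?opprK ger0_norm ?(ltW t0) // in hh *; lra.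
have hrest : \sum_(i <- rz z | i != b0)
    (psi lam (D y i + t * cb z i) - psi lam (D y i) +
     (psi lam (D y i + - t * cb z i) - psi lam (D y i))) <= 18 * (lam * t ^+ 2).
  have c0 : 0 <= lam * t ^+ 2 by rewrite mulr_ge0 ?sqr_ge0 // ltW.
  apply: (le_trans _ (@sum_const_le (rz z) (fun i => i != b0) (lam * t ^+ 2) c0 (rz_size z))).
  apply: ler_sum => b _.
  have hh := psi_semi (D y b) (t * cb z b) (ltW hl).
  have : lam * (t * cb z b) ^+ 2 <= lam * t ^+ 2.
    apply: ler_wpM2l; first exact: ltW.
    rewrite exprMn; have := cb_sq z b; have := sqr_ge0 t; nra.
  rewrite mulNr; lra.
have : lam * (t ^+ 2 - t) + 18 * (lam * t ^+ 2) < 0.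
  have -> : lam * (t ^+ 2 - t) + 18 * (lam * t ^+ 2) = (lam * t) * (19 * t - 1) by ring.
  rewrite pmulr_rlt0 ?mulr_gt0 //; lra.
lra.
Qed.

Lemma esum_pZ (I : set bond) (c : R) (f : bond -> R) : 0 < c ->
  \esum_(i in I) (c * f i)%:E = (c%:E * \esum_(i in I) (f i)%:E)%E.
Proof.
move=> c0; rewrite /esum -ereal_sup_pZl //; congr ereal_sup.
rewrite image_comp; apply: eq_imagel => A [finA _] /=.
rewrite !fsumEFin //.
by rewrite -EFinM mulr_fsumr.
Qed.

End S.

Unset Implicit Arguments.
Set Strict Implicit.

Theorem lemma3p4 (R : realType) (lam : R) (u : site -> R) :
  0 < lam ->
  W12 u ->
  locally_stable lam (fun x => yhat R x + u x) ->
  (forall b, bonds R b ->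
     ~ (exists k : int, D (fun x => yhat R x + u x) b = 2^-1 + k%:~R)) /\
  (forall v : site -> R, W12 v ->
     (lam%:E * Dnorm2 v <=
      \esum_(b in bonds R)
        (psi2 lam (D (fun x => yhat R x + u x) b) * (D v b) ^+ 2)%:E)%E).
Proof.
move=> hl _ hst; split.
  by move=> b hb; exact: (not_half hl hst hb).
move=> v _.
rewrite (eq_esum (b := fun b => (lam * D v b ^+ 2)%:E)); last first.
  by move=> b hb; rewrite psi2_val //; exact: (not_half hl hst hb).
by rewrite esum_pZ.
Qed.
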